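(* Let $\mathcal{C}$ be a deflation-exact category and $\mathcal{A}$ an admissibly deflation-percolating subcategory. Let $X\rightarrowtail Y\twoheadrightarrow Z$ be a conflation and $f\colon Y\twoheadrightarrow B$ a deflation with $B\in\mathcal{A}$. Then there is a commutative diagram $$\begin{array}{ccccc} X''&\rightarrowtail&Y''&\twoheadrightarrow&Z''\\ \downarrow&&\downarrow&&\downarrow\\ X&\rightarrowtail&Y&\twoheadrightarrow&Z\\ \downarrow&&\downarrow{\scriptstyle f}&&\downarrow\\ A&\rightarrowtail&B&\twoheadrightarrow&C\end{array}$$ in which all rows and columns are conflations, the three upper vertical maps $X''\rightarrowtail X$, $Y''\rightarrowtail Y$, $Z''\rightarrowtail Z$ are $\mathcal{A}^{-1}$-inflations, and the bottom row lies in $\mathcal{A}$. Moreover, the upper left square is a pullback and the lower right square is a pushout.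
   Context: A conflation category is an additive category with a class of kernel-cokernel pairs (closed under isomorphisms) called conflations; first map an inflation, second a deflation. A deflation-exact category is a conflation category satisfying: (R0) $1_0$ is a deflation; (R1) composites of deflations are deflations; (R2) pullbacks of deflations along arbitrary morphisms exist and are deflations. A non-empty full subcategory $\mathcal{A}$ is admissibly deflation-percolating if: (A1) for every conflation $A'\rightarrowtail A\twoheadrightarrow A''$, $A\in\mathcal{A}$ iff $A',A''\in\mathcal{A}$; (A2) every morphism $C\to A$ with $A\in\mathcal{A}$ factors as a deflation $C\twoheadrightarrow A'$ followed by an inflation $A'\rightarrowtail A$ with $A'\in\mathcal{A}$; (A3) if $a\colon C\rightarrowtail D$ is an inflation and $b\colon C\twoheadrightarrow A$ a deflation with $A\in\mathcal{A}$, the pushout of $a$ along $b$ exists and yields a deflation $D\twoheadrightarrow P$ and an inflation $A\rightarrowtail P$. An $\mathcal{A}^{-1}$-inflation is an inflation whose cokernel lies in $\mathcal{A}$. *)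

(* Defs.v *)
From HB Require Import structures.
From mathcomp Require Import all_boot all_algebra.
Set Implicit Arguments. Unset Strict Implicit. Unset Printing Implicit Defensive.
Import GRing.Theory.
Local Open Scope ring_scope.

Record AddCat := {
  Obj : Type;
  Mor : Obj -> Obj -> zmodType;
  mcomp : forall X Y Z : Obj, Mor Y Z -> Mor X Y -> Mor X Z;
  idm : forall X : Obj, Mor X X;
  comp_assoc : forall (W X Y Z : Obj) (h : Mor Y Z) (g : Mor X Y) (f : Mor W X),
      mcomp h (mcomp g f) = mcomp (mcomp h g) f;
  comp_id_l : forall (X Y : Obj) (f : Mor X Y), mcomp (idm Y) f = f;
  comp_id_r : forall (X Y : Obj) (f : Mor X Y), mcomp f (idm X) = f;
  comp_addl : forall (X Y Z : Obj) (g1 g2 : Mor Y Z) (f : Mor X Y),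
      mcomp (g1 + g2) f = mcomp g1 f + mcomp g2 f;
  comp_addr : forall (X Y Z : Obj) (g : Mor Y Z) (f1 f2 : Mor X Y),
      mcomp g (f1 + f2) = mcomp g f1 + mcomp g f2;
  zero_obj : Obj;
  zero_obj_initial : forall (X : Obj) (f : Mor zero_obj X), f = 0;
  zero_obj_terminal : forall (X : Obj) (f : Mor X zero_obj), f = 0;
  biprod : Obj -> Obj -> Obj;
  bp_inl : forall X Y : Obj, Mor X (biprod X Y);
  bp_inr : forall X Y : Obj, Mor Y (biprod X Y);
  bp_pl : forall X Y : Obj, Mor (biprod X Y) X;
  bp_pr : forall X Y : Obj, Mor (biprod X Y) Y;
  bp_pl_inl : forall X Y : Obj, mcomp (bp_pl X Y) (bp_inl X Y) = idm X;
  bp_pr_inr : forall X Y : Obj, mcomp (bp_pr X Y) (bp_inr X Y) = idm Y;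
  bp_sum : forall X Y : Obj,
      mcomp (bp_inl X Y) (bp_pl X Y) + mcomp (bp_inr X Y) (bp_pr X Y) = idm (biprod X Y)
}.

Arguments Mor : clear implicits.
Arguments mcomp {a X Y Z}.
Arguments idm {a}.
Arguments zero_obj {a}.

Section Defs.
Variable C : AddCat.
Local Notation Ob := (Obj C).
Local Notation "g \o f" := (mcomp g f).

Definition is_iso (X Y : Ob) (f : Mor C X Y) : Prop :=
  exists g : Mor C Y X, g \o f = idm X /\ f \o g = idm Y.

Definition is_kernel (X Y Z : Ob) (i : Mor C X Y) (p : Mor C Y Z) : Prop :=
  p \o i = 0 /\
  forall (W : Ob) (g : Mor C W Y), p \o g = 0 -> exists! h : Mor C W X, i \o h = g.

Definition is_cokernel (X Y Z : Ob) (i : Mor C X Y) (p : Mor C Y Z) : Prop :=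
  p \o i = 0 /\
  forall (W : Ob) (g : Mor C Y W), g \o i = 0 -> exists! h : Mor C Z W, h \o p = g.

Definition kernel_cokernel_pair (X Y Z : Ob) (i : Mor C X Y) (p : Mor C Y Z) : Prop :=
  is_kernel i p /\ is_cokernel i p.

Definition is_pullback (A B T P : Ob) (f : Mor C A T) (g : Mor C B T)
    (p1 : Mor C P A) (p2 : Mor C P B) : Prop :=
  f \o p1 = g \o p2 /\
  forall (W : Ob) (u : Mor C W A) (v : Mor C W B), f \o u = g \o v ->
    exists! h : Mor C W P, p1 \o h = u /\ p2 \o h = v.

Definition is_pushout (S A B Q : Ob) (f : Mor C S A) (g : Mor C S B)
    (q1 : Mor C A Q) (q2 : Mor C B Q) : Prop :=
  q1 \o f = q2 \o g /\
  forall (W : Ob) (u : Mor C A W) (v : Mor C B W), u \o f = v \o g ->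
    exists! h : Mor C Q W, h \o q1 = u /\ h \o q2 = v.

End Defs.

Record ConflCat := {
  cc_cat :> AddCat;
  Confl : forall X Y Z : Obj cc_cat, Mor cc_cat X Y -> Mor cc_cat Y Z -> Prop;
  confl_kc : forall (X Y Z : Obj cc_cat) (i : Mor cc_cat X Y) (p : Mor cc_cat Y Z),
      Confl i p -> kernel_cokernel_pair i p;
  confl_iso : forall (X Y Z X' Y' Z' : Obj cc_cat)
      (i : Mor cc_cat X Y) (p : Mor cc_cat Y Z)
      (i' : Mor cc_cat X' Y') (p' : Mor cc_cat Y' Z')
      (a : Mor cc_cat X X') (b : Mor cc_cat Y Y') (c : Mor cc_cat Z Z'),
      is_iso a -> is_iso b -> is_iso c ->
      mcomp b i = mcomp i' a -> mcomp c p = mcomp p' b ->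
      Confl i p -> Confl i' p'
}.

Section Conf.
Variable C : ConflCat.
Local Notation Ob := (Obj C).
Local Notation "g \o f" := (mcomp g f).

Definition inflation (X Y : Ob) (i : Mor C X Y) : Prop :=
  exists (Z : Ob) (p : Mor C Y Z), Confl i p.

Definition deflation (Y Z : Ob) (p : Mor C Y Z) : Prop :=
  exists (X : Ob) (i : Mor C X Y), Confl i p.

(** Deflation-exact category: axioms R0, R1, R2. *)
Definition deflation_exact : Prop :=
  deflation (idm (@zero_obj C))
  /\ (forall (X Y Z : Ob) (p : Mor C X Y) (q : Mor C Y Z),
        deflation p -> deflation q -> deflation (q \o p))
  /\ (forall (Y Z Z' : Ob) (p : Mor C Y Z) (t : Mor C Z' Z),
        deflation p ->
        exists (P : Ob) (p' : Mor C P Z') (t' : Mor C P Y),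
          is_pullback p t t' p' /\ deflation p').

(** Admissibly deflation-percolating full subcategory (given by a predicate
    on objects): non-empty + A1, A2, A3. *)
Definition adm_defl_percolating (A : Ob -> Prop) : Prop :=
  (exists X : Ob, A X)
  /\ (forall (X Y Z : Ob) (i : Mor C X Y) (p : Mor C Y Z),
        Confl i p -> (A Y <-> (A X /\ A Z)))
  /\ (forall (X A0 : Ob) (g : Mor C X A0), A A0 ->
        exists (A' : Ob) (d : Mor C X A') (j : Mor C A' A0),
          A A' /\ deflation d /\ inflation j /\ g = j \o d)
  /\ (forall (X D A0 : Ob) (a : Mor C X D) (b : Mor C X A0),
        inflation a -> deflation b -> A A0 ->
        exists (P : Ob) (d : Mor C D P) (j : Mor C A0 P),
          is_pushout a b d j /\ deflation d /\ inflation j).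

Definition Ainv_inflation (A : Ob -> Prop) (X Y : Ob) (i : Mor C X Y) : Prop :=
  exists (Z : Ob) (p : Mor C Y Z), Confl i p /\ A Z.

End Conf.

(* Main.v *)
Require Import Defs.
From mathcomp Require Import all_boot.
From mathcomp Require Import all_algebra.
Set Implicit Arguments. Unset Strict Implicit. Unset Printing Implicit Defensive.
Import GRing.Theory.
Local Open Scope ring_scope.

Section Helpers.
Variable C : ConflCat.
Local Notation "g ⊚ f" := (mcomp g f) (at level 40, left associativity).

Lemma comp0l (X Y Z : Obj C) (f : Mor C X Y) : (0 : Mor C Y Z) ⊚ f = 0.
Proof.
have H := comp_addl (0 : Mor C Y Z) 0 f; rewrite addr0 in H.
by apply: (addrI (0 ⊚ f)); rewrite -H addr0.
Qed.

Lemma comp0r (X Y Z : Obj C) (g : Mor C Y Z) : g ⊚ (0 : Mor C X Y) = 0.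
Proof.
have H := comp_addr g (0 : Mor C X Y) 0; rewrite addr0 in H.
by apply: (addrI (g ⊚ 0)); rewrite -H addr0.
Qed.

Lemma compNl (X Y Z : Obj C) (g : Mor C Y Z) (f : Mor C X Y) : (- g) ⊚ f = - (g ⊚ f).
Proof.
have H := comp_addl g (-g) f; rewrite subrr comp0l in H.
by apply: (addrI (g ⊚ f)); rewrite -H subrr.
Qed.

Lemma compBl (X Y Z : Obj C) (g1 g2 : Mor C Y Z) (f : Mor C X Y) :
  (g1 - g2) ⊚ f = g1 ⊚ f - g2 ⊚ f.
Proof. by rewrite comp_addl compNl. Qed.

Lemma kernel_mono (X Y Z : Obj C) (i : Mor C X Y) (p : Mor C Y Z) :
  is_kernel i p -> forall W (h1 h2 : Mor C W X), i ⊚ h1 = i ⊚ h2 -> h1 = h2.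
Proof.
move=> [pi0 Hk] W h1 h2 E.
have : p ⊚ (i ⊚ h1) = 0 by rewrite comp_assoc pi0 comp0l.
move/(Hk W) => [h [_ Hu]].
exact: etrans (esym (Hu h1 erefl)) (Hu h2 (esym E)).
Qed.

Lemma coker_epi (X Y Z : Obj C) (i : Mor C X Y) (p : Mor C Y Z) :
  is_cokernel i p -> forall W (h1 h2 : Mor C Z W), h1 ⊚ p = h2 ⊚ p -> h1 = h2.
Proof.
move=> [pi0 Hk] W h1 h2 E.
have : (h1 ⊚ p) ⊚ i = 0 by rewrite -comp_assoc pi0 comp0r.
move/(Hk W) => [h [_ Hu]].
exact: etrans (esym (Hu h1 erefl)) (Hu h2 (esym E)).
Qed.

Lemma defl_epi (Y Z : Obj C) (p : Mor C Y Z) :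
  deflation p -> forall W (h1 h2 : Mor C Z W), h1 ⊚ p = h2 ⊚ p -> h1 = h2.
Proof. by move=> [X [i /confl_kc [_ Hc]]]; apply: coker_epi Hc. Qed.

Lemma iso_id (X : Obj C) : is_iso (idm X).
Proof. by exists (idm X); rewrite comp_id_l. Qed.

Lemma defl_postiso (Y Z Z' : Obj C) (p : Mor C Y Z) (c : Mor C Z Z') :
  deflation p -> is_iso c -> deflation (c ⊚ p).
Proof.
move=> [K [k Ck]] Ic; exists K, k.
apply: (confl_iso (a := idm K) (b := idm Y) (c := c) _ _ _ _ _ Ck) => //;
  rewrite ?comp_id_l ?comp_id_r //; exact: iso_id.
Qed.

Lemma confl_kernel (K I Y Z : Obj C) (k : Mor C K Y) (i : Mor C I Y) (p : Mor C Y Z) :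
  Confl k p -> is_kernel i p -> Confl i p.
Proof.
move=> Ck Ki.
have [Kk _] := confl_kc Ck.
have [pk0 Hk] := Kk; have [pi0 Hi] := Ki.
have [σ [Eσ _]] := Hi K k pk0.
have [τ [Eτ _]] := Hk I i pi0.
apply: (confl_iso (a := σ) (b := idm Y) (c := idm Z) _ _ _ _ _ Ck);
  rewrite ?comp_id_l ?comp_id_r //; try exact: iso_id.
exists τ; split.
- by apply: (kernel_mono Kk); rewrite comp_assoc Eτ Eσ comp_id_r.
- by apply: (kernel_mono Ki); rewrite comp_assoc Eσ Eτ comp_id_r.
Qed.

Lemma pb_defl
  (R2 : forall (Y Z Z' : Obj C) (p : Mor C Y Z) (t : Mor C Z' Z),
        deflation p ->
        exists (P : Obj C) (p' : Mor C P Z') (t' : Mor C P Y),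
          is_pullback p t t' p' /\ deflation p')
  (Y Z Z' P2 : Obj C) (p : Mor C Y Z) (t : Mor C Z' Z) (t2 : Mor C P2 Y) (p2 : Mor C P2 Z') :
  deflation p -> is_pullback p t t2 p2 -> deflation p2.
Proof.
move=> Dp [E2 U2].
case: (R2 _ _ _ p t Dp) => P [p' [t' [[E U] [K [k Ck]]]]].
case: (U P2 t2 p2 E2) => φ [[φ1 φ2] _].
case: (U2 P t' p' E) => ψ [[ψ1 ψ2] _].
have ψφ : ψ ⊚ φ = idm P2.
  case: (U2 P2 t2 p2 E2) => h [_ Hu].
  have e1 := Hu (ψ ⊚ φ) (conj (etrans (comp_assoc _ _ _) (etrans (f_equal (mcomp^~ φ) ψ1) φ1))
                               (etrans (comp_assoc _ _ _) (etrans (f_equal (mcomp^~ φ) ψ2) φ2))).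
  have e2 := Hu (idm P2) (conj (comp_id_r _) (comp_id_r _)).
  by rewrite -e1 -e2.
have φψ : φ ⊚ ψ = idm P.
  case: (U P t' p' E) => h [_ Hu].
  have e1 := Hu (φ ⊚ ψ) (conj (etrans (comp_assoc _ _ _) (etrans (f_equal (mcomp^~ ψ) φ1) ψ1))
                               (etrans (comp_assoc _ _ _) (etrans (f_equal (mcomp^~ ψ) φ2) ψ2))).
  have e2 := Hu (idm P) (conj (comp_id_r _) (comp_id_r _)).
  by rewrite -e1 -e2.
exists K, (ψ ⊚ k).
apply: (confl_iso (a := idm K) (b := ψ) (c := idm Z') _ _ _ _ _ Ck);
  rewrite ?comp_id_l ?comp_id_r ?ψ2 //; try exact: iso_id.
by exists φ.
Qed.

Lemma po_iso (S A B Q R : Obj C) (f : Mor C S A) (g : Mor C S B)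
  (q1 : Mor C A Q) (q2 : Mor C B Q) (r1 : Mor C A R) (r2 : Mor C B R) :
  is_pushout f g q1 q2 -> is_pushout f g r1 r2 ->
  exists φ : Mor C Q R, is_iso φ /\ φ ⊚ q1 = r1.
Proof.
move=> [Eq Uq] [Er Ur].
case: (Uq R r1 r2 Er) => φ [[φ1 φ2] _].
case: (Ur Q q1 q2 Eq) => ψ [[ψ1 ψ2] _].
exists φ; split => //; exists ψ; split.
- case: (Uq Q q1 q2 Eq) => h [_ Hu].
  have e1 := Hu (ψ ⊚ φ) (conj (etrans (esym (comp_assoc _ _ _)) (etrans (f_equal (mcomp ψ) φ1) ψ1))
                               (etrans (esym (comp_assoc _ _ _)) (etrans (f_equal (mcomp ψ) φ2) ψ2))).
  have e2 := Hu (idm Q) (conj (comp_id_l _) (comp_id_l _)).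
  by rewrite -e1 -e2.
- case: (Ur R r1 r2 Er) => h [_ Hu].
  have e1 := Hu (φ ⊚ ψ) (conj (etrans (esym (comp_assoc _ _ _)) (etrans (f_equal (mcomp φ) ψ1) φ1))
                               (etrans (esym (comp_assoc _ _ _)) (etrans (f_equal (mcomp φ) ψ2) φ2))).
  have e2 := Hu (idm R) (conj (comp_id_l _) (comp_id_l _)).
  by rewrite -e1 -e2.
Qed.

Lemma defl_of_A (A : Obj C -> Prop)
  (A2 : forall (X A0 : Obj C) (g : Mor C X A0), A A0 ->
        exists (A' : Obj C) (d : Mor C X A') (j : Mor C A' A0),
          A A' /\ deflation d /\ inflation j /\ g = j ⊚ d)
  (W Z A' : Obj C) (g : Mor C Z A') (s : Mor C W Z) :
  A A' -> deflation (g ⊚ s) -> deflation g.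
Proof.
move=> HA' Dgs.
case: (A2 _ _ g HA') => A'' [d [j [_ [Dd [[W' [c Cjc]] Eg]]]]].
have [[cj0 Kj] _] := confl_kc Cjc.
have c0 : c = 0.
  apply: (defl_epi Dgs).
  by rewrite comp0l Eg !comp_assoc cj0 !comp0l.
have [h [jh _]] : exists! h, j ⊚ h = idm A' by apply: Kj; rewrite c0 comp0l.
rewrite Eg; apply: defl_postiso Dd _; exists h; split => //.
by apply: (kernel_mono (conj cj0 Kj)); rewrite comp_assoc jh comp_id_l comp_id_r.
Qed.

Lemma bp_pl_inr (X Y : Obj C) : bp_pl X Y ⊚ bp_inr X Y = 0.
Proof.
have H : bp_pl X Y ⊚ (bp_inl X Y ⊚ bp_pl X Y + bp_inr X Y ⊚ bp_pr X Y) = bp_pl X Y.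
  by rewrite bp_sum comp_id_r.
rewrite comp_addr !comp_assoc bp_pl_inl comp_id_l in H.
have H2 : bp_pl X Y ⊚ bp_inr X Y ⊚ bp_pr X Y = 0.
  by apply: (addrI (bp_pl X Y)); rewrite H addr0.
by rewrite -[LHS]comp_id_r -(bp_pr_inr X Y) comp_assoc H2 comp0l.
Qed.

Lemma bp_pr_inl (X Y : Obj C) : bp_pr X Y ⊚ bp_inl X Y = 0.
Proof.
have H : bp_pr X Y ⊚ (bp_inl X Y ⊚ bp_pl X Y + bp_inr X Y ⊚ bp_pr X Y) = bp_pr X Y.
  by rewrite bp_sum comp_id_r.
rewrite comp_addr !comp_assoc bp_pr_inr comp_id_l in H.
have H2 : bp_pr X Y ⊚ bp_inl X Y ⊚ bp_pl X Y = 0.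
  by apply: (addrI (bp_pr X Y)); rewrite addrC H addr0.
by rewrite -[LHS]comp_id_r -(bp_pl_inl X Y) comp_assoc H2 comp0l.
Qed.

End Helpers.

Local Notation "g ⊚ f" := (mcomp g f) (at level 40, left associativity).

Theorem mainTheorem7 (C : ConflCat) (A : Obj C -> Prop)
  (HC : deflation_exact C) (HA : adm_defl_percolating A)
  (X Y Z B : Obj C) (x : Mor C X Y) (y : Mor C Y Z) (f : Mor C Y B)
  (Hxy : Confl x y) (Hf : deflation f) (HB : A B) :
  exists (X'' Y'' Z'' A0 C0 : Obj C)
    (x'' : Mor C X'' Y'') (y'' : Mor C Y'' Z'')
    (a : Mor C A0 B) (b : Mor C B C0)
    (u1 : Mor C X'' X) (u2 : Mor C Y'' Y) (u3 : Mor C Z'' Z)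
    (d1 : Mor C X A0) (d3 : Mor C Z C0),
    (* rows are conflations *)
    [/\ Confl x'' y'', Confl a b &
    (* columns are conflations *)
    [/\ Confl u1 d1, Confl u2 f & Confl u3 d3]] /\
    (* commutativity of the four squares *)
    [/\ mcomp x u1 = mcomp u2 x'', mcomp y u2 = mcomp u3 y'',
        mcomp f x = mcomp a d1 & mcomp d3 y = mcomp b f] /\
    (* upper vertical maps are A^{-1}-inflations *)
    [/\ Ainv_inflation A u1, Ainv_inflation A u2 & Ainv_inflation A u3] /\
    (* bottom row lies in A *)
    [/\ A A0, A B & A C0] /\
    (* upper left square is a pullback, lower right square is a pushout *)
    is_pullback x u2 u1 x'' /\ is_pushout y f d3 b.
Proof.
have [R0 [R1 R2]] := HC.
have [_ [A1 [A2 A3]]] := HA.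
case: (A2 _ _ (f ⊚ x) HB) => A0 [d1 [a [HA0 [Dd1 [[C0 [b Cab]] Efx]]]]].
have [_ HC0] := (A1 _ _ _ _ _ Cab).1 HB.
have [[ba0 Ka] [_ Cb]] := confl_kc Cab.
have [[yx0 Kx] [_ Cy]] := confl_kc Hxy.
have Dy : deflation y by exists X, x.
have Db : deflation b by exists A0, a.
have am := kernel_mono (conj ba0 Ka).
have xm := kernel_mono (conj yx0 Kx).
have [d3 [Ed3 _]] : exists! d3 : Mor C Z C0, d3 ⊚ y = b ⊚ f.
  by apply: Cy; rewrite -comp_assoc Efx comp_assoc ba0 comp0l.
have Dd3 : deflation d3.
  by apply: (defl_of_A A2 (s := y) HC0); rewrite Ed3; apply: R1.
have [X'' [u1 Cu1]] := Dd1.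
have [Y'' [u2 Cu2]] := Hf.
have [Z'' [u3 Cu3]] := Dd3.
have [[d1u1 Ku1] _] := confl_kc Cu1.
have [[fu2 Ku2] _] := confl_kc Cu2.
have [[d3u3 Ku3] _] := confl_kc Cu3.
have u1m := kernel_mono (conj d1u1 Ku1).
have u2m := kernel_mono (conj fu2 Ku2).
have u3m := kernel_mono (conj d3u3 Ku3).
have [x'' [Ex'' _]] : exists! x'', u2 ⊚ x'' = x ⊚ u1.
  by apply: Ku2; rewrite comp_assoc Efx -comp_assoc d1u1 comp0r.
have [y'' [Ey'' _]] : exists! y'', u3 ⊚ y'' = y ⊚ u2.
  by apply: Ku3; rewrite comp_assoc Ed3 -comp_assoc fu2 comp0r.
have Kx'' : is_kernel x'' y''.
  split.
    apply: u3m; rewrite comp_assoc Ey'' -comp_assoc Ex'' comp_assoc yx0 comp0l comp0r //.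
  move=> W g E.
  have [k [Ek _]] : exists! k, x ⊚ k = u2 ⊚ g.
    by apply: Kx; rewrite comp_assoc -Ey'' -comp_assoc E comp0r.
  have [h [Eh _]] : exists! h, u1 ⊚ h = k.
    apply: Ku1; apply: am.
    by rewrite comp_assoc -Efx -comp_assoc Ek comp_assoc fu2 comp0l comp0r.
  have xh : x'' ⊚ h = g by apply: u2m; rewrite comp_assoc Ex'' -comp_assoc Eh Ek.
  exists h; split => // h' Eh'.
  apply: u1m; apply: xm.
  by rewrite !comp_assoc -!Ex'' -!comp_assoc xh Eh'.
have Dy'' : deflation y''.
  case: (R2 _ _ _ y u3 Dy) => P [p' [t' [[Ept Upt] Dp']]].
  have [s [[ts ps] _]] : exists! s : Mor C X P, t' ⊚ s = x /\ p' ⊚ s = 0.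
    by apply: Upt; rewrite yx0 comp0r.
  have [m [Em _]] : exists! m : Mor C P A0, a ⊚ m = f ⊚ t'.
    apply: Ka.
    by rewrite comp_assoc -Ed3 -comp_assoc Ept comp_assoc d3u3 comp0l.
  have ms : m ⊚ s = d1.
    by apply: am; rewrite comp_assoc Em -comp_assoc ts Efx.
  have [n [[tn pn] _]] : exists! n : Mor C Y'' P, t' ⊚ n = u2 /\ p' ⊚ n = y''.
    by apply: Upt; rewrite Ey''.
  have mn : m ⊚ n = 0.
    by apply: am; rewrite comp_assoc Em -comp_assoc tn fu2 comp0r.
  have nker : forall W (α : Mor C W P), m ⊚ α = 0 -> exists h, n ⊚ h = α.
    move=> W α mα.
    have [h [Eh _]] : exists! h, u2 ⊚ h = t' ⊚ α.
      by apply: Ku2; rewrite comp_assoc -Em -comp_assoc mα comp0r.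
    exists h.
    have [k [_ Uk]] : exists! k, t' ⊚ k = t' ⊚ α /\ p' ⊚ k = p' ⊚ α.
      by apply: Upt; rewrite !comp_assoc Ept.
    rewrite -(Uk α) //; symmetry; apply: Uk; split.
      by rewrite comp_assoc tn Eh.
    rewrite comp_assoc pn; apply: u3m.
    rewrite comp_assoc Ey'' -comp_assoc Eh comp_assoc Ept.
    by rewrite comp_assoc.
  have Ks : is_kernel s p'.
    split => // W g pg.
    have [h [Eh _]] : exists! h, x ⊚ h = t' ⊚ g.
      by apply: Kx; rewrite comp_assoc Ept -comp_assoc pg comp0r.
    have [k [_ Uk]] : exists! k, t' ⊚ k = t' ⊚ g /\ p' ⊚ k = p' ⊚ g.
      by apply: Upt; rewrite !comp_assoc Ept.
    have sh : s ⊚ h = g.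
      rewrite -(Uk g) //; symmetry; apply: Uk; split.
        by rewrite comp_assoc ts Eh.
      by rewrite comp_assoc ps comp0l pg.
    exists h; split => // h' Eh'.
    by apply: xm; rewrite Eh -ts -comp_assoc Eh'.
  have [K' [k' Ck']] := Dp'.
  have Cs : Confl s p' := confl_kernel Ck' Ks.
  have [_ [_ Cp']] := confl_kc Cs.
  case: (A3 _ _ _ s d1 (ex_intro _ Z'' (ex_intro _ p' Cs)) Dd1 HA0) =>
    P2 [δ [j [POδ [Dδ _]]]].
  pose inl := bp_inl A0 Z''; pose inr := bp_inr A0 Z''.
  pose pl := bp_pl A0 Z''; pose pr := bp_pr A0 Z''.
  pose M := inl ⊚ m + inr ⊚ p'.
  have plinl : pl ⊚ inl = idm _ by apply: bp_pl_inl.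
  have prinr : pr ⊚ inr = idm _ by apply: bp_pr_inr.
  have plinr : pl ⊚ inr = 0 by apply: bp_pl_inr.
  have prinl : pr ⊚ inl = 0 by apply: bp_pr_inl.
  have bsum : inl ⊚ pl + inr ⊚ pr = idm _ by apply: bp_sum.
  have POM : is_pushout s d1 M inl.
    split.
      by rewrite /M comp_addl -!comp_assoc ms ps comp0r addr0.
    move=> W u v E.
    have [w [Ew _]] : exists! w, w ⊚ p' = u - v ⊚ m.
      by apply: Cp'; rewrite compBl -comp_assoc ms E subrr.
    exists (v ⊚ pl + w ⊚ pr); split; first split.
    - rewrite /M comp_addr !comp_addl -!comp_assoc !(comp_assoc pl) !(comp_assoc pr).
      rewrite plinl plinr prinl prinr !comp_id_l !comp0l !comp0r addr0 add0r Ew.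
      by rewrite addrC subrK.
    - by rewrite comp_addl -!comp_assoc plinl prinl comp_id_r comp0r addr0.
    - move=> h' [Hu Hv].
      have Hw : h' ⊚ inr = w.
        apply: (defl_epi (ex_intro _ K' (ex_intro _ k' Ck'))).
        rewrite Ew -Hu /M comp_addr !comp_assoc Hv.
        by rewrite (addrC (v ⊚ m)) addrK.
      by rewrite -[h']comp_id_r -bsum comp_addr !comp_assoc Hv Hw.
  have [φ [Iφ φδ]] := po_iso POδ POM.
  have DM : deflation M by rewrite -φδ; apply: defl_postiso.
  apply: (pb_defl R2 DM (t := inr) (t2 := n)).
  split.
    by rewrite /M comp_addl -!comp_assoc mn pn comp0r add0r.
  move=> W α β E.
  have E1 := f_equal (mcomp pl) E.
  rewrite /M comp_addl comp_addr !comp_assoc plinl plinr comp_id_l !comp0l addr0 in E1.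
  have E2 := f_equal (mcomp pr) E.
  rewrite /M comp_addl comp_addr !comp_assoc prinl prinr !comp_id_l !comp0l add0r in E2.
  have [h nh] := nker W α E1.
  exists h; split; first split => //.
    by rewrite -pn -comp_assoc nh E2.
  move=> h' [nh' _]; apply: u2m.
  by rewrite -tn -!comp_assoc nh nh'.
have [K'' [k'' Ck'']] := Dy''.
have Cxy'' : Confl x'' y'' := confl_kernel Ck'' Kx''.
exists X'', Y'', Z'', A0, C0, x'', y'', a, b, u1, u2, u3, d1, d3.
split; first by split.
split; first by split.
split; first by split; [exists A0, d1 | exists B, f | exists C0, d3].
split; first by split.
split.
  split; first by [].
  move=> W w1 w2 E.
  have [h [Eh _]] : exists! h, u1 ⊚ h = w1.
    apply: Ku1; apply: am.
    by rewrite comp_assoc -Efx -comp_assoc E comp_assoc fu2 comp0l comp0r.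
  exists h; split; first split => //.
    by apply: u2m; rewrite comp_assoc Ex'' -comp_assoc Eh E.
  by move=> h' [Eh' _]; apply: u1m; rewrite Eh Eh'.
split => // W u v E.
have va : v ⊚ a = 0.
  apply: (defl_epi Dd1).
  by rewrite -comp_assoc -Efx comp_assoc -E -comp_assoc yx0 comp0r comp0l.
have [h [Eh _]] := Cb W v va.
exists h; split; first split => //.
  by apply: (defl_epi Dy); rewrite -comp_assoc Ed3 comp_assoc Eh E.
by move=> h' [_ Eh']; apply: (coker_epi (conj ba0 Cb)); rewrite Eh Eh'.
Qed.
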